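(* Let $(G,J,g)$ be a $2$-step nilpotent Lie group equipped with a left-invariant Hermitian structure $(J,g)$, with Lie algebra $(\mathfrak g,\mu)$, and assume that $J\mu(\mathfrak g,\mathfrak g)$ is contained in the center of $\mathfrak g$. Then, with respect to any left-invariant, $g$-unitary $(1,0)$-frame $\{Z_1,\dots,Z_n\}$ on $G$ (with $Z_{\bar j}=\overline{Z_j}$), and summing over repeated indices $r,s$, $$\Theta(g)(Z_j,Z_{\bar k})=g\big(\mu(Z_s,Z_{\bar r})^{0,1},Z_j\big)\,g\big(\mu(Z_{\bar s},Z_r)^{1,0},Z_{\bar k}\big)+\tfrac12\,g\big(\mu(Z_{\bar s},Z_{\bar r}),Z_j\big)\,g\big(\mu(Z_s,Z_r),Z_{\bar k}\big).$$
   Context: $g$, $J$, $\mu$ are extended complex (bi)linearly to $\mathfrak g\otimes\mathbb C=\mathfrak g^{1,0}\oplus\mathfrak g^{0,1}$, and $X^{1,0},X^{0,1}$ denote the components of $X$. For the Hermitian metric $g$ with Chern connection $\nabla$ (the unique connection preserving $g$ and $J$ whose torsion has vanishing $(1,1)$-part), curvature $\Omega$ and torsion $T$ with $T_{js\bar p}=g_{l\bar p}T^l_{js}$, set $S(g)_{j\bar k}=g^{\bar rs}\Omega_{s\bar rj\bar k}$, $Q^2(g)_{j\bar k}=g^{\bar pq}g^{\bar rs}T_{sq\bar k}T_{\overline{rp}j}$ and $\Theta(g)=S(g)+\frac12 Q^2(g)$. *)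

(* Defs.v *)
From HB Require Import structures.
From mathcomp Require Import all_boot all_order all_algebra.
From mathcomp Require Export complex.
Set Implicit Arguments. Unset Strict Implicit. Unset Printing Implicit Defensive.
Import Order.TTheory GRing.Theory Num.Theory.
Local Open Scope ring_scope.

(* A bilinear map g x g -> g is encoded by its values on the
   standard basis: c i j = B(e_i, e_j).  Endomorphisms are matrices acting
   on the right (x |-> x *m J); bilinear forms are matrices
   (x, y) |-> x *m G *m y^T.  Over the complexification these formulas give
   exactly the complex (bi)linear extensions. *)
Section Generic.
Variables (K : comUnitRingType) (d : nat).

Definition bil (c : 'I_d -> 'I_d -> 'rV[K]_d) (x y : 'rV[K]_d) : 'rV[K]_d :=
  \sum_(i < d) \sum_(j < d) (x 0 i * y 0 j) *: c i j.

Definition form (G : 'M[K]_d) (x y : 'rV[K]_d) : K := (x *m G *m y^T) 0 0.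

Definition actJ (J : 'M[K]_d) (x : 'rV[K]_d) : 'rV[K]_d := x *m J.
End Generic.

Section Real.
Variables (R : rcfType) (d : nat).
Implicit Types (c : 'I_d -> 'I_d -> 'rV[R]_d) (J G : 'M[R]_d).

Definition is_lie_bracket c :=
  (forall x y, bil c x y = - bil c y x) /\
  (forall x y z, bil c (bil c x y) z + bil c (bil c y z) x
                 + bil c (bil c z x) y = 0).

Definition two_step_nilpotent c :=
  (forall x y z, bil c (bil c x y) z = 0) /\ (exists x y, bil c x y != 0).

Definition in_center c (z : 'rV[R]_d) := forall y, bil c z y = 0.

(* integrable (Nijenhuis tensor vanishes) almost complex structure *)
Definition is_complex_structure c J :=
  J *m J = - 1%:M /\
  (forall x y, bil c (actJ J x) (actJ J y) - actJ J (bil c (actJ J x) y)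
               - actJ J (bil c x (actJ J y)) - bil c x y = 0).

Definition is_hermitian_metric J G :=
  G^T = G /\ (forall x : 'rV[R]_d, x != 0 -> 0 < form G x x) /\
  (forall x y, form G (actJ J x) (actJ J y) = form G x y).
End Real.

Section Complexified.
Variables (R : rcfType) (d : nat).
Local Notation C := (R[i]).
Local Open Scope complex_scope.

Definition cplx (x : R) : C := x%:C.
Definition cplx_mx m n (A : 'M[R]_(m, n)) : 'M[C]_(m, n) := map_mx cplx A.
Definition cplx_bil (c : 'I_d -> 'I_d -> 'rV[R]_d) : 'I_d -> 'I_d -> 'rV[C]_d :=
  fun i j => cplx_mx (c i j).
Definition conjv (X : 'rV[C]_d) : 'rV[C]_d := map_mx (fun z : C => z^*) X.

Variables (c Gam : 'I_d -> 'I_d -> 'rV[R]_d) (J G : 'M[R]_d).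

Definition muC := bil (cplx_bil c).
Definition JC := actJ (cplx_mx J).
Definition gC := form (cplx_mx G).
(* left-invariant connection nabla_X Y (real bilinear, extended C-bilinearly) *)
Definition nablaC := bil (cplx_bil Gam).

Definition p10 (X : 'rV[C]_d) : 'rV[C]_d := 2^-1 *: (X - 'i *: JC X).
Definition p01 (X : 'rV[C]_d) : 'rV[C]_d := 2^-1 *: (X + 'i *: JC X).

Definition torsionC X Y := nablaC X Y - nablaC Y X - muC X Y.
Definition curvC X Y W :=
  nablaC X (nablaC Y W) - nablaC Y (nablaC X W) - nablaC (muC X Y) W.

Definition is_chern_connection :=
  (forall x y z : 'rV[R]_d,
      form G (bil Gam x y) z + form G y (bil Gam x z) = 0) /\
  (forall x y : 'rV[R]_d, bil Gam x (actJ J y) = actJ J (bil Gam x y)) /\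
  (forall X Y : 'rV[C]_d, torsionC (p10 X) (p01 Y) = 0).
End Complexified.

Section Theta.
Variables (R : rcfType) (n : nat).
Local Notation C := (R[i]).
Local Notation d := (n.*2).
Variables (c Gam : 'I_d -> 'I_d -> 'rV[R]_d) (J G : 'M[R]_d)
          (Z : 'I_n -> 'rV[C]_d).

Definition is_10_frame :=
  forall j, JC J (Z j) = (Complex 0 1) *: Z j.
Definition is_unitary_frame :=
  forall j k, gC G (Z j) (conjv (Z k)) = (j == k)%:R.

Local Notation g := (gC G).
Local Notation Zb k := (conjv (Z k)).

(* g_{s \bar t} and its inverse g^{\bar t s} = ginv t s *)
Definition gmat : 'M[C]_n := \matrix_(s, t) g (Z s) (Zb t).
Definition ginv : 'M[C]_n := invmx gmat.

(* Omega_{a \bar b c \bar e} = g(Omega(Z_a, Z_{\bar b}) Z_c, Z_{\bar e}) *)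
Definition OmegaC a b c' e :=
  g (curvC c Gam (Z a) (Zb b) (Z c')) (Zb e).
(* T_{a b \bar e} = g(T(Z_a,Z_b), Z_{\bar e}) and its conjugate-type version *)
Definition Tlow a b e := g (torsionC c Gam (Z a) (Z b)) (Zb e).
Definition Tlowbar a b e := g (torsionC c Gam (Zb a) (Zb b)) (Z e).

Definition S_chern j k := \sum_(r < n) \sum_(s < n) ginv r s * OmegaC s r j k.
Definition Q2 j k :=
  \sum_(p < n) \sum_(q < n) \sum_(r < n) \sum_(s < n)
     ginv p q * ginv r s * Tlow s q k * Tlowbar r p j.
Definition Theta j k := S_chern j k + 2^-1 * Q2 j k.
End Theta.

(* Main.v *)
Require Import Defs.
From HB Require Import structures.
From mathcomp Require Import all_boot all_order all_algebra.
From mathcomp Require Import complex.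
From mathcomp Require Import ring.
Import Order.TTheory GRing.Theory Num.Theory.
Local Open Scope ring_scope.

Section Lin.
Variables (K : comUnitRingType) (d : nat).
Implicit Types (x y z : 'rV[K]_d) (a : K) (c : 'I_d -> 'I_d -> 'rV[K]_d) (G J : 'M[K]_d).

Lemma bilDl c x1 x2 y : bil c (x1 + x2) y = bil c x1 y + bil c x2 y.
Proof.
rewrite /bil -big_split /=; apply eq_bigr => i _.
rewrite -big_split /=; apply eq_bigr => j _.
by rewrite !mxE mulrDl scalerDl.
Qed.

Lemma bilDr c x y1 y2 : bil c x (y1 + y2) = bil c x y1 + bil c x y2.
Proof.
rewrite /bil -big_split /=; apply eq_bigr => i _.
rewrite -big_split /=; apply eq_bigr => j _.
by rewrite !mxE mulrDr scalerDl.
Qed.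

Lemma bilZl c a x y : bil c (a *: x) y = a *: bil c x y.
Proof.
rewrite /bil scaler_sumr; apply eq_bigr => i _.
rewrite scaler_sumr; apply eq_bigr => j _.
by rewrite !mxE scalerA mulrA.
Qed.

Lemma bilZr c a x y : bil c x (a *: y) = a *: bil c x y.
Proof.
rewrite /bil scaler_sumr; apply eq_bigr => i _.
rewrite scaler_sumr; apply eq_bigr => j _.
by rewrite !mxE scalerA mulrCA.
Qed.

Lemma bil0l c y : bil c 0 y = 0.
Proof. by rewrite -[X in bil _ X _](scale0r (0 : 'rV[K]_d)) bilZl scale0r. Qed.
Lemma bil0r c x : bil c x 0 = 0.
Proof. by rewrite -[X in bil _ _ X](scale0r (0 : 'rV[K]_d)) bilZr scale0r. Qed.
Lemma bilNl c x y : bil c (- x) y = - bil c x y.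
Proof. by rewrite -scaleN1r bilZl scaleN1r. Qed.
Lemma bilNr c x y : bil c x (- y) = - bil c x y.
Proof. by rewrite -scaleN1r bilZr scaleN1r. Qed.
Lemma bilBl c x1 x2 y : bil c (x1 - x2) y = bil c x1 y - bil c x2 y.
Proof. by rewrite bilDl bilNl. Qed.
Lemma bilBr c x y1 y2 : bil c x (y1 - y2) = bil c x y1 - bil c x y2.
Proof. by rewrite bilDr bilNr. Qed.

Lemma bil_suml c (I : Type) (r : seq I) (P : pred I) (F : I -> 'rV[K]_d) y :
  bil c (\sum_(i <- r | P i) F i) y = \sum_(i <- r | P i) bil c (F i) y.
Proof.
apply: (big_rec2 (fun u v => bil c v y = u)); first by rewrite bil0l.
by move=> i u v _ <-; rewrite bilDl.
Qed.
Lemma bil_sumr c (I : Type) (r : seq I) (P : pred I) (F : I -> 'rV[K]_d) x :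
  bil c x (\sum_(i <- r | P i) F i) = \sum_(i <- r | P i) bil c x (F i).
Proof.
apply: (big_rec2 (fun u v => bil c x v = u)); first by rewrite bil0r.
by move=> i u v _ <-; rewrite bilDr.
Qed.

Lemma formDl G x1 x2 y : Defs.form G (x1 + x2) y = Defs.form G x1 y + Defs.form G x2 y.
Proof. by rewrite /Defs.form !mulmxDl mxE. Qed.
Lemma formDr G x y1 y2 : Defs.form G x (y1 + y2) = Defs.form G x y1 + Defs.form G x y2.
Proof. by rewrite /Defs.form linearD /= mulmxDr mxE. Qed.
Lemma formZl G a x y : Defs.form G (a *: x) y = a * Defs.form G x y.
Proof. by rewrite /Defs.form -!scalemxAl mxE. Qed.
Lemma formZr G a x y : Defs.form G x (a *: y) = a * Defs.form G x y.
Proof. by rewrite /Defs.form linearZ /= -scalemxAr mxE. Qed.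
Lemma form0l G y : Defs.form G 0 y = 0.
Proof. by rewrite -[X in Defs.form _ X _](scale0r (0 : 'rV[K]_d)) formZl mul0r. Qed.
Lemma form0r G x : Defs.form G x 0 = 0.
Proof. by rewrite -[X in Defs.form _ _ X](scale0r (0 : 'rV[K]_d)) formZr mul0r. Qed.
Lemma formNl G x y : Defs.form G (- x) y = - Defs.form G x y.
Proof. by rewrite -scaleN1r formZl mulN1r. Qed.
Lemma formNr G x y : Defs.form G x (- y) = - Defs.form G x y.
Proof. by rewrite -scaleN1r formZr mulN1r. Qed.
Lemma formBl G x1 x2 y : Defs.form G (x1 - x2) y = Defs.form G x1 y - Defs.form G x2 y.
Proof. by rewrite formDl formNl. Qed.
Lemma formBr G x y1 y2 : Defs.form G x (y1 - y2) = Defs.form G x y1 - Defs.form G x y2.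
Proof. by rewrite formDr formNr. Qed.
Lemma form_suml G (I : Type) (r : seq I) (P : pred I) (F : I -> 'rV[K]_d) y :
  Defs.form G (\sum_(i <- r | P i) F i) y = \sum_(i <- r | P i) Defs.form G (F i) y.
Proof.
apply: (big_rec2 (fun u v => Defs.form G v y = u)); first by rewrite form0l.
by move=> i u v _ <-; rewrite formDl.
Qed.
Lemma form_sumr G (I : Type) (r : seq I) (P : pred I) (F : I -> 'rV[K]_d) x :
  Defs.form G x (\sum_(i <- r | P i) F i) = \sum_(i <- r | P i) Defs.form G x (F i).
Proof.
apply: (big_rec2 (fun u v => Defs.form G x v = u)); first by rewrite form0r.
by move=> i u v _ <-; rewrite formDr.
Qed.
Lemma form_sym G x y : G^T = G -> Defs.form G x y = Defs.form G y x.
Proof.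
move=> HG; rewrite /Defs.form.
have -> : (x *m G *m y^T) 0 0 = ((x *m G *m y^T)^T) 0 0 by rewrite [in RHS]mxE.
by rewrite !trmx_mul trmxK HG mulmxA.
Qed.

Lemma actJD J x y : actJ J (x + y) = actJ J x + actJ J y.
Proof. by rewrite /actJ mulmxDl. Qed.
Lemma actJZ J a x : actJ J (a *: x) = a *: actJ J x.
Proof. by rewrite /actJ scalemxAl. Qed.
Lemma actJN J x : actJ J (- x) = - actJ J x.
Proof. by rewrite -scaleN1r actJZ scaleN1r. Qed.
Lemma actJB J x y : actJ J (x - y) = actJ J x - actJ J y.
Proof. by rewrite actJD actJN. Qed.
Lemma actJ0 J : actJ J 0 = 0.
Proof. by rewrite /actJ mul0mx. Qed.

Lemma lin_ext_v (F : 'rV[K]_d -> 'rV[K]_d) :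
  (forall a x y, F (a *: x + y) = a *: F x + F y) ->
  (forall i, F (delta_mx 0 i) = 0) -> forall x, F x = 0.
Proof.
move=> FL Fe x.
have F0 : F 0 = 0.
  have H := FL 1 0 0; rewrite !scale1r addr0 in H.
  by apply: (addrI (F 0)); rewrite addr0 -H.
rewrite (row_sum_delta x).
apply: (big_rec (fun v => F v = 0)) => // i v _ Hv.
by rewrite -[_ *: _ + _]/(_ *: _ + v) FL Fe Hv scaler0 addr0.
Qed.

Lemma lin_ext_s (F : 'rV[K]_d -> K) :
  (forall a x y, F (a *: x + y) = a * F x + F y) ->
  (forall i, F (delta_mx 0 i) = 0) -> forall x, F x = 0.
Proof.
move=> FL Fe x.
have F0 : F 0 = 0.
  have H := FL 1 0 0; rewrite scale1r mul1r addr0 in H.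
  by apply: (addrI (F 0)); rewrite addr0 -H.
rewrite (row_sum_delta x).
apply: (big_rec (fun v => F v = 0)) => // i v _ Hv.
by rewrite FL Fe Hv mulr0 addr0.
Qed.
End Lin.

Section Transfer.
Variables (R : rcfType) (d : nat).
Local Notation C := R[i].
Implicit Types (x y : 'rV[R]_d) (c : 'I_d -> 'I_d -> 'rV[R]_d) (G J : 'M[R]_d).

Lemma cplx_mx_bil c x y :
  cplx_mx (bil c x y) = bil (cplx_bil c) (cplx_mx x) (cplx_mx y).
Proof.
apply/rowP => k; rewrite /bil /cplx_bil /cplx_mx !mxE !summxE /cplx rmorph_sum.
apply eq_bigr => i _; rewrite !summxE rmorph_sum; apply eq_bigr => j _.
by rewrite !mxE rmorphM rmorphM.
Qed.

Lemma cplx_mx_actJ J x : cplx_mx (actJ J x) = actJ (cplx_mx J) (cplx_mx x).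
Proof.
apply/rowP => k; rewrite /actJ /cplx_mx !mxE /cplx rmorph_sum.
by apply eq_bigr => i _; rewrite !mxE rmorphM.
Qed.

Lemma cplx_form G x y :
  cplx (Defs.form G x y) = Defs.form (cplx_mx G) (cplx_mx x) (cplx_mx y).
Proof.
rewrite /Defs.form /cplx_mx !mxE /cplx rmorph_sum.
apply eq_bigr => i _; rewrite !mxE rmorphM rmorph_sum; congr (_ * _).
by apply eq_bigr => j _; rewrite !mxE rmorphM.
Qed.

Lemma cplx_delta (i : 'I_d) :
  cplx_mx (delta_mx 0 i : 'rV[R]_d) = delta_mx 0 i.
Proof.
apply/rowP => k; rewrite /cplx_mx !mxE /cplx.
by case: (_ && _).
Qed.

Lemma cplx_mx0 : cplx_mx (0 : 'rV[R]_d) = 0.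
Proof. by apply/rowP => k; rewrite /cplx_mx !mxE. Qed.

Lemma cplx0 : cplx (0 : R) = 0.
Proof. by []. Qed.

Lemma cplx_mx_opp m (A : 'M[R]_(m, d)) : cplx_mx (- A) = - cplx_mx A.
Proof. by apply/matrixP => i k; rewrite /cplx_mx !mxE /cplx rmorphN. Qed.

Lemma cplx_mx_mul (A B : 'M[R]_d) : cplx_mx (A *m B) = cplx_mx A *m cplx_mx B.
Proof.
apply/matrixP => i k; rewrite /cplx_mx !mxE /cplx rmorph_sum.
by apply eq_bigr => j _; rewrite !mxE rmorphM.
Qed.

Lemma cplx_mx_tr (A : 'M[R]_d) : cplx_mx A^T = (cplx_mx A)^T.
Proof. by apply/matrixP => i k; rewrite /cplx_mx !mxE. Qed.

Lemma cplx_mx1 : cplx_mx (1%:M : 'M[R]_d) = 1%:M.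
Proof. by apply/matrixP => i k; rewrite /cplx_mx !mxE /cplx; case: (i == k). Qed.

Lemma conjvK (x : 'rV[C]_d) : conjv (conjv x) = x.
Proof. by apply/rowP => k; rewrite /conjv !mxE conjcK. Qed.

Lemma conjvZ (a : C) (x : 'rV[C]_d) : conjv (a *: x) = (a^*)%C *: conjv x.
Proof. by apply/rowP => k; rewrite /conjv !mxE rmorphM. Qed.

Lemma conjv_actJ J (x : 'rV[C]_d) :
  conjv (actJ (cplx_mx J) x) = actJ (cplx_mx J) (conjv x).
Proof.
apply/rowP => k; rewrite /conjv /actJ /cplx_mx !mxE rmorph_sum.
by apply eq_bigr => i _; rewrite !mxE rmorphM /cplx; congr (_ * _); apply: conjc_real.
Qed.
End Transfer.

Section Main.
Variables (R : rcfType) (n : nat).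
Local Notation d := n.*2.
Local Notation C := R[i].
Local Notation V := 'rV[R[i]]_n.*2.
Variables (c Gam : 'I_n.*2 -> 'I_n.*2 -> 'rV[R]_n.*2) (J G : 'M[R]_n.*2)
          (Z : 'I_n -> 'rV[R[i]]_n.*2).
Local Notation mu := (muC c).
Local Notation nab := (nablaC Gam).
Local Notation g := (gC G).
Local Notation JJ := (JC J).
Local Notation P10 := (p10 J).
Local Notation P01 := (p01 J).
Local Notation Zb k := (conjv (Z k)).
Local Notation ii := (Complex 0 1 : R[i]).

Hypothesis Hanti : forall x y : V, mu x y = - mu y x.
Hypothesis Hnil : forall x y z : V, mu (mu x y) z = 0.
Hypothesis HJc : forall x y z : V, mu (JJ (mu x y)) z = 0.
Hypothesis HJ2 : forall x : V, JJ (JJ x) = - x.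
Hypothesis Hgsym : forall x y : V, g x y = g y x.
Hypothesis HgJ : forall x y : V, g (JJ x) (JJ y) = g x y.
Hypothesis Hmet : forall x y w : V, g (nab x y) w + g y (nab x w) = 0.
Hypothesis HnabJ : forall x y : V, nab x (JJ y) = JJ (nab x y).
Hypothesis Htor : forall X Y : V, torsionC c Gam (P10 X) (P01 Y) = 0.
Hypothesis Hframe : is_10_frame J Z.
Hypothesis Hunit : is_unitary_frame G Z.

Implicit Types (x y z u v w : V) (a : C).

Lemma muDl x1 x2 y : mu (x1 + x2) y = mu x1 y + mu x2 y. Proof. exact: bilDl. Qed.
Lemma muDr x y1 y2 : mu x (y1 + y2) = mu x y1 + mu x y2. Proof. exact: bilDr. Qed.
Lemma muZl a x y : mu (a *: x) y = a *: mu x y. Proof. exact: bilZl. Qed.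
Lemma muZr a x y : mu x (a *: y) = a *: mu x y. Proof. exact: bilZr. Qed.
Lemma muNl x y : mu (- x) y = - mu x y. Proof. exact: bilNl. Qed.
Lemma muNr x y : mu x (- y) = - mu x y. Proof. exact: bilNr. Qed.
Lemma muBl x1 x2 y : mu (x1 - x2) y = mu x1 y - mu x2 y. Proof. exact: bilBl. Qed.
Lemma muBr x y1 y2 : mu x (y1 - y2) = mu x y1 - mu x y2. Proof. exact: bilBr. Qed.
Lemma mu0l y : mu 0 y = 0. Proof. exact: bil0l. Qed.
Lemma mu0r x : mu x 0 = 0. Proof. exact: bil0r. Qed.
Lemma mu_suml (I : Type) (r : seq I) (P : pred I) (F : I -> V) y :
  mu (\sum_(i <- r | P i) F i) y = \sum_(i <- r | P i) mu (F i) y.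
Proof. exact: bil_suml. Qed.
Lemma mu_sumr (I : Type) (r : seq I) (P : pred I) (F : I -> V) x :
  mu x (\sum_(i <- r | P i) F i) = \sum_(i <- r | P i) mu x (F i).
Proof. exact: bil_sumr. Qed.

Lemma nabDl x1 x2 y : nab (x1 + x2) y = nab x1 y + nab x2 y. Proof. exact: bilDl. Qed.
Lemma nabDr x y1 y2 : nab x (y1 + y2) = nab x y1 + nab x y2. Proof. exact: bilDr. Qed.
Lemma nabZl a x y : nab (a *: x) y = a *: nab x y. Proof. exact: bilZl. Qed.
Lemma nabZr a x y : nab x (a *: y) = a *: nab x y. Proof. exact: bilZr. Qed.

Lemma gDl x1 x2 y : g (x1 + x2) y = g x1 y + g x2 y. Proof. exact: formDl. Qed.
Lemma gDr x y1 y2 : g x (y1 + y2) = g x y1 + g x y2. Proof. exact: formDr. Qed.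
Lemma gZl a x y : g (a *: x) y = a * g x y. Proof. exact: formZl. Qed.
Lemma gZr a x y : g x (a *: y) = a * g x y. Proof. exact: formZr. Qed.
Lemma gNl x y : g (- x) y = - g x y. Proof. exact: formNl. Qed.
Lemma gNr x y : g x (- y) = - g x y. Proof. exact: formNr. Qed.
Lemma gBl x1 x2 y : g (x1 - x2) y = g x1 y - g x2 y. Proof. exact: formBl. Qed.
Lemma gBr x y1 y2 : g x (y1 - y2) = g x y1 - g x y2. Proof. exact: formBr. Qed.
Lemma g0l y : g 0 y = 0. Proof. exact: form0l. Qed.
Lemma g0r x : g x 0 = 0. Proof. exact: form0r. Qed.
Lemma g_suml (I : Type) (r : seq I) (P : pred I) (F : I -> V) y :
  g (\sum_(i <- r | P i) F i) y = \sum_(i <- r | P i) g (F i) y.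
Proof. exact: form_suml. Qed.
Lemma g_sumr (I : Type) (r : seq I) (P : pred I) (F : I -> V) x :
  g x (\sum_(i <- r | P i) F i) = \sum_(i <- r | P i) g x (F i).
Proof. exact: form_sumr. Qed.

Lemma JJD x y : JJ (x + y) = JJ x + JJ y. Proof. exact: actJD. Qed.
Lemma JJZ a x : JJ (a *: x) = a *: JJ x. Proof. exact: actJZ. Qed.
Lemma JJN x : JJ (- x) = - JJ x. Proof. exact: actJN. Qed.
Lemma JJ0 : JJ 0 = 0. Proof. exact: actJ0. Qed.

Lemma ii2 : ii * ii = -1.
Proof. by rewrite -expr2 sqr_i. Qed.

Lemma two_neq0 : (2 : C) != 0.
Proof. by rewrite pnatr_eq0. Qed.

Lemma p10E x : P10 x = 2^-1 *: (x - ii *: JJ x). Proof. by []. Qed.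
Lemma p01E x : P01 x = 2^-1 *: (x + ii *: JJ x). Proof. by []. Qed.

Definition is10 v := JJ v = ii *: v.
Definition is01 v := JJ v = - ii *: v.

Lemma half_twice v : 2^-1 *: (v + v) = v.
Proof.
have -> : v + v = (2 : C) *: v by rewrite scaler_nat mulr2n.
by rewrite scalerA mulVf ?two_neq0 // scale1r.
Qed.

Lemma p10_10 v : is10 v -> P10 v = v.
Proof. by move=> Hv; rewrite p10E Hv scalerA ii2 scaleN1r opprK half_twice. Qed.
Lemma p01_01 v : is01 v -> P01 v = v.
Proof.
by move=> Hv; rewrite p01E Hv scalerA mulrN ii2 opprK scale1r half_twice.
Qed.
Lemma p10_01 v : is01 v -> P10 v = 0.
Proof.
by move=> Hv; rewrite p10E Hv scalerA mulrN ii2 opprK scale1r subrr scaler0.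
Qed.
Lemma p01_10 v : is10 v -> P01 v = 0.
Proof.
by move=> Hv; rewrite p01E Hv scalerA ii2 scaleN1r subrr scaler0.
Qed.

Lemma p_split x : P10 x + P01 x = x.
Proof. by rewrite p10E p01E -scalerDr addrACA addNr addr0 half_twice. Qed.

Lemma p10_is10 x : is10 (P10 x).
Proof.
rewrite /is10 p10E !(JJZ, JJD, JJN) HJ2.
rewrite [RHS]scalerA mulrC -scalerA; congr (_ *: _).
by rewrite scalerBr scalerA ii2 scaleN1r opprK scalerN opprK addrC.
Qed.
Lemma p01_is01 x : is01 (P01 x).
Proof.
rewrite /is01 p01E !(JJZ, JJD, JJN) HJ2.
rewrite [RHS]scalerA mulrC -scalerA; congr (_ *: _).
by rewrite scalerDr scalerA mulNr ii2 opprK scale1r scalerN scaleNr addrC.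
Qed.

Lemma P10L a x y : P10 (a *: x + y) = a *: P10 x + P10 y.
Proof. by rewrite !p10E JJD JJZ; move: (JJ x) (JJ y) => u v; apply/rowP => k; rewrite !mxE; ring. Qed.
Lemma p01_sub x : P01 x = x - P10 x.
Proof. by apply/eqP; rewrite eq_sym subr_eq addrC p_split. Qed.
Lemma P01L a x y : P01 (a *: x + y) = a *: P01 x + P01 y.
Proof. by rewrite !p01_sub P10L scalerBr opprD addrACA. Qed.
Lemma P10D x y : P10 (x + y) = P10 x + P10 y.
Proof. by have := P10L 1 x y; rewrite !scale1r. Qed.
Lemma P01D x y : P01 (x + y) = P01 x + P01 y.
Proof. by have := P01L 1 x y; rewrite !scale1r. Qed.
Lemma P10Z a x : P10 (a *: x) = a *: P10 x.
Proof. by rewrite !p10E JJZ; move: (JJ x) => u; apply/rowP => k; rewrite !mxE; ring. Qed.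
Lemma P01Z a x : P01 (a *: x) = a *: P01 x.
Proof. by rewrite !p01_sub P10Z scalerBr. Qed.
Lemma P10N x : P10 (- x) = - P10 x.
Proof. by rewrite -scaleN1r P10Z scaleN1r. Qed.
Lemma P01N x : P01 (- x) = - P01 x.
Proof. by rewrite -scaleN1r P01Z scaleN1r. Qed.
Lemma P100 : P10 0 = 0.
Proof. by rewrite -[X in P10 X](scale0r (0 : V)) P10Z scale0r. Qed.
Lemma P010 : P01 0 = 0.
Proof. by rewrite -[X in P01 X](scale0r (0 : V)) P01Z scale0r. Qed.

Lemma oppC_eq0 a : - a = a -> a = 0.
Proof.
move=> H; apply/eqP; have : a + a == 0 by rewrite -{1}H addNr.
by rewrite -mulr2n mulrn_eq0.
Qed.

Lemma g_10_10 u v : is10 u -> is10 v -> g u v = 0.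
Proof.
move=> Hu Hv; apply: oppC_eq0; have := HgJ u v.
by rewrite Hu Hv gZl gZr mulrA ii2 mulN1r.
Qed.
Lemma g_01_01 u v : is01 u -> is01 v -> g u v = 0.
Proof.
move=> Hu Hv; apply: oppC_eq0; have := HgJ u v.
by rewrite Hu Hv gZl gZr mulrA mulrNN ii2 mulN1r.
Qed.


Lemma Z10 k : is10 (Z k). Proof. exact: Hframe. Qed.

Lemma conj_ii : (ii^*)%C = - ii.
Proof. by apply/eqP; rewrite eq_complex /= oppr0 !eqxx. Qed.

Lemma Zb01 k : is01 (Zb k).
Proof.
by rewrite /is01 /JC -conjv_actJ; have := Z10 k; rewrite /is10 /JC => ->; rewrite conjvZ conj_ii.
Qed.

Lemma gZZ (a b : 'I_n) : g (Z a) (Z b) = 0. Proof. exact: g_10_10 (Z10 a) (Z10 b). Qed.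
Lemma gZbZb (a b : 'I_n) : g (Zb a) (Zb b) = 0. Proof. exact: g_01_01 (Zb01 a) (Zb01 b). Qed.
Lemma gZZb (a b : 'I_n) : g (Z a) (Zb b) = (a == b)%:R. Proof. exact: Hunit. Qed.
Lemma gZbZ (a b : 'I_n) : g (Zb a) (Z b) = (b == a)%:R. Proof. by rewrite Hgsym gZZb. Qed.

Lemma entry_form m p (A : 'M[C]_(m, d)) (B : 'M[C]_d) (Cm : 'M[C]_(p, d)) (a : 'I_m) (b : 'I_p) :
  (A *m B *m Cm^T) a b = Defs.form B (row a A) (row b Cm).
Proof.
rewrite /Defs.form !mxE; apply eq_bigr => k _; rewrite !mxE; congr (_ * _).
by apply eq_bigr => l _; rewrite !mxE.
Qed.

Lemma row_id (x : V) : row 0 x = x.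
Proof. by apply/rowP => k; rewrite !mxE. Qed.

Definition Zm : 'M[C]_(n, d) := \matrix_(a < n, k < d) Z a 0 k.
Definition Zbm : 'M[C]_(n, d) := \matrix_(a < n, k < d) Zb a 0 k.
Lemma row_Zm (a : 'I_n) : row a Zm = Z a. Proof. by apply/rowP => k; rewrite !mxE. Qed.
Lemma row_Zbm (a : 'I_n) : row a Zbm = Zb a. Proof. by apply/rowP => k; rewrite !mxE. Qed.

Lemma expand x : x = \sum_(i < n) g x (Zb i) *: Z i + \sum_(i < n) g x (Z i) *: Zb i.
Proof.
pose M := col_mx Zm Zbm.
pose K := cplx_mx G *m (col_mx Zbm Zm)^T.
have blk : forall (A B : 'M[C]_(n, d)) (f : 'I_n -> 'I_n -> C),
    (forall (a b : 'I_n), g (row a A) (row b B) = f a b) ->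
    A *m (cplx_mx G *m B^T) = \matrix_(a, b) f a b.
  move=> A B f Hf; apply/matrixP => a b; rewrite mulmxA entry_form mxE.
  exact: Hf.
have MK : M *m K = 1%:M.
  rewrite /M /K tr_col_mx mul_mx_row mul_col_row (scalar_mx_block n n).
  congr block_mx.
  - rewrite (blk _ _ (fun (a b : 'I_n) => (a == b)%:R)); last by move=> a b; rewrite row_Zm row_Zbm gZZb.
    by apply/matrixP => a b; rewrite !mxE.
  - rewrite (blk _ _ (fun (a b : 'I_n) => 0)); last by move=> a b; rewrite !row_Zm gZZ.
    by apply/matrixP => a b; rewrite !mxE.
  - rewrite (blk _ _ (fun (a b : 'I_n) => 0)); last by move=> a b; rewrite !row_Zbm gZbZb.
    by apply/matrixP => a b; rewrite !mxE.
  - rewrite (blk _ _ (fun (a b : 'I_n) => (a == b)%:R)); last by move=> a b; rewrite row_Zm row_Zbm gZbZ eq_sym.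
    by apply/matrixP => a b; rewrite !mxE.
have rk : \rank M = (n + n)%N.
  apply/eqP; rewrite eqn_leq rank_leq_row /=.
  by rewrite -{1}(mxrank1 C (n + n)) -MK mxrankM_maxl.
have full : row_full M by rewrite /row_full rk addnn.
have /submxP [D HD] : (x <= M)%MS by exact: submx_full.
have xK : x *m K = D by rewrite HD -mulmxA MK mulmx1.
rewrite {1}HD -xK mulmx_sum_row big_split_ord /=.
congr (_ + _); apply eq_bigr => i _.
- rewrite /M rowKu row_Zm; congr (_ *: _).
  by rewrite /K mulmxA entry_form rowKu row_Zbm row_id.
- rewrite /M rowKd row_Zbm; congr (_ *: _).
  by rewrite /K mulmxA entry_form rowKd row_Zm row_id.
Qed.

Lemma P10B x y : P10 (x - y) = P10 x - P10 y. Proof. by rewrite P10D P10N. Qed.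
Lemma P01B x y : P01 (x - y) = P01 x - P01 y. Proof. by rewrite P01D P01N. Qed.

Lemma P10_sum (F : 'I_n -> V) : P10 (\sum_i F i) = \sum_i P10 (F i).
Proof. exact: (big_morph _ P10D P100). Qed.
Lemma P01_sum (F : 'I_n -> V) : P01 (\sum_i F i) = \sum_i P01 (F i).
Proof. exact: (big_morph _ P01D P010). Qed.

Lemma E10 x : P10 x = \sum_i g x (Zb i) *: Z i.
Proof.
rewrite {1}(expand x) P10D !P10_sum.
rewrite [X in _ + X]big1 ?addr0; last by move=> i _; rewrite P10Z p10_01 ?scaler0 //; exact: Zb01.
by apply eq_bigr => i _; rewrite P10Z p10_10 //; exact: Z10.
Qed.
Lemma E01 x : P01 x = \sum_i g x (Z i) *: Zb i.
Proof.
rewrite {1}(expand x) P01D !P01_sum.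
rewrite [X in X + _]big1 ?add0r; last by move=> i _; rewrite P01Z p01_10 ?scaler0 //; exact: Z10.
by apply eq_bigr => i _; rewrite P01Z p01_01 //; exact: Zb01.
Qed.

Section LinFun.
Variable L : V -> C.
Hypothesis HL : forall a u v, L (a *: u + v) = a * L u + L v.
Lemma L0 : L 0 = 0.
Proof.
have H := HL 1 0 0; rewrite scale1r mul1r addr0 in H.
by apply: (addrI (L 0)); rewrite addr0 -H.
Qed.
Lemma L_sum (F : 'I_n -> V) : L (\sum_i F i) = \sum_i L (F i).
Proof.
apply: (big_morph _ _ L0) => u v.
by rewrite -[u]scale1r HL mul1r scale1r.
Qed.
Lemma L_scale a u : L (a *: u) = a * L u.
Proof. by rewrite -[_ *: _]addr0 HL L0 addr0. Qed.
Lemma sum_L01 X : \sum_i g X (Z i) * L (Zb i) = L (P01 X).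
Proof. by rewrite E01 L_sum; apply eq_bigr => i _; rewrite L_scale. Qed.
Lemma sum_L10 X : \sum_i g X (Zb i) * L (Z i) = L (P10 X).
Proof. by rewrite E10 L_sum; apply eq_bigr => i _; rewrite L_scale. Qed.
End LinFun.

Lemma nab10 x y : is10 y -> is10 (nab x y).
Proof. by move=> Hy; rewrite /is10 -HnabJ Hy nabZr. Qed.
Lemma nab01 x y : is01 y -> is01 (nab x y).
Proof. by move=> Hy; rewrite /is01 -HnabJ Hy nabZr. Qed.

Lemma gr01 w x : is10 w -> g w (P01 x) = g w x.
Proof. by move=> Hw; rewrite -{2}(p_split x) gDr (g_10_10 _ _ Hw (p10_is10 x)) add0r. Qed.
Lemma gr10 w x : is01 w -> g w (P10 x) = g w x.
Proof. by move=> Hw; rewrite -{2}(p_split x) gDr (g_01_01 _ _ Hw (p01_is01 x)) addr0. Qed.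
Lemma gl01 w x : is10 w -> g (P01 x) w = g x w.
Proof. by move=> Hw; rewrite Hgsym gr01 // Hgsym. Qed.
Lemma gl10 w x : is01 w -> g (P10 x) w = g x w.
Proof. by move=> Hw; rewrite Hgsym gr10 // Hgsym. Qed.

Lemma tor_eq y w : is10 y -> is01 w -> nab y w - nab w y - mu y w = 0.
Proof. by move=> Hy Hw; have := Htor y w; rewrite (p10_10 _ Hy) (p01_01 _ Hw). Qed.

Lemma N1 y w : is10 y -> is01 w -> nab w y = P10 (mu w y).
Proof.
move=> Hy Hw; have := congr1 P10 (tor_eq _ _ Hy Hw).
rewrite P100 !P10B (p10_01 _ (nab01 y _ Hw)) (p10_10 _ (nab10 w _ Hy)) Hanti P10N.
by rewrite sub0r opprK => /eqP; rewrite addrC subr_eq0 => /eqP ->.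
Qed.
Lemma N2 y w : is10 y -> is01 w -> nab y w = P01 (mu y w).
Proof.
move=> Hy Hw; have := congr1 P01 (tor_eq _ _ Hy Hw).
rewrite P010 !P01B (p01_01 _ (nab01 y _ Hw)) (p01_10 _ (nab10 w _ Hy)) subr0.
by move=> /eqP; rewrite subr_eq0 => /eqP.
Qed.

Lemma Hm x y w : g (nab x y) w = - g y (nab x w).
Proof. by apply/eqP; rewrite -addr_eq0 Hmet. Qed.

Lemma cen_l u v y : mu (mu u v) y = 0. Proof. exact: Hnil. Qed.
Lemma cen_r u v y : mu y (mu u v) = 0. Proof. by rewrite Hanti Hnil oppr0. Qed.
Lemma cenJ_l u v y : mu (JJ (mu u v)) y = 0. Proof. exact: HJc. Qed.
Lemma cenJ_r u v y : mu y (JJ (mu u v)) = 0. Proof. by rewrite Hanti HJc oppr0. Qed.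
Lemma cen01_l u v y : mu (P01 (mu u v)) y = 0.
Proof. by rewrite p01E muZl muDl muZl cen_l cenJ_l scaler0 addr0 scaler0. Qed.
Lemma cen01_r u v y : mu y (P01 (mu u v)) = 0.
Proof. by rewrite p01E muZr muDr muZr cen_r cenJ_r scaler0 addr0 scaler0. Qed.
Lemma cen10_l u v y : mu (P10 (mu u v)) y = 0.
Proof. by rewrite p10E muZl muBl muZl cen_l cenJ_l scaler0 subr0 scaler0. Qed.
Lemma cen10_r u v y : mu y (P10 (mu u v)) = 0.
Proof. by rewrite p10E muZr muBr muZr cen_r cenJ_r scaler0 subr0 scaler0. Qed.


Lemma g_P10_P01 X Y : g (P10 X) (P01 Y) = \sum_(t < n) g X (Zb t) * g (Z t) Y.
Proof.
rewrite E10 g_suml; apply eq_bigr => t _.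
by rewrite gZl gr01 //; exact: Z10.
Qed.

Lemma sum_delta (F : 'I_n -> C) (r : 'I_n) :
  \sum_(s < n) (1%:M : 'M[C]_n) r s * F s = F r.
Proof.
rewrite (bigD1 r) //= big1 ?addr0; first by rewrite mxE eqxx mul1r.
by move=> s Hs; rewrite mxE eq_sym (negbTE Hs) mul0r.
Qed.

Lemma ginv1 : ginv G Z = 1%:M.
Proof.
rewrite /ginv (_ : gmat G Z = 1%:M) ?invmx1 //.
by apply/matrixP => t t'; rewrite !mxE gZZb.
Qed.

Definition S2 (F : 'I_n -> 'I_n -> C) := \sum_(r < n) \sum_(p < n) F r p.
Lemma S2D F H : S2 (fun r p => F r p + H r p) = S2 F + S2 H.
Proof. by rewrite /S2 -big_split; apply eq_bigr => r _; rewrite -big_split. Qed.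
Lemma S2N F : S2 (fun r p => - F r p) = - S2 F.
Proof. by rewrite /S2 -sumrN; apply eq_bigr => r _; rewrite -sumrN. Qed.
Lemma S2Z a F : S2 (fun r p => a * F r p) = a * S2 F.
Proof. by rewrite /S2 mulr_sumr; apply eq_bigr => r _; rewrite mulr_sumr. Qed.
Lemma S2_ext F H : (forall r p, F r p = H r p) -> S2 F = S2 H.
Proof. by move=> E; apply eq_bigr => r _; apply eq_bigr => p _. Qed.
Lemma S2_swap F : S2 F = S2 (fun r p => F p r).
Proof. by rewrite /S2 exchange_big. Qed.

Section JK.
Variables (j k : 'I_n).
Definition Aq r p := g (Z p) (mu (Z r) (Zb k)).
Definition Abq r p := g (Zb p) (mu (Zb r) (Z j)).
Definition Bq r p := g (mu (Z r) (Z p)) (Zb k).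
Definition Bbq r p := g (mu (Zb r) (Zb p)) (Z j).
Definition Gq r t := g (Z j) (mu (Z r) (Zb t)) * g (mu (Zb r) (Z t)) (Zb k).

Lemma Tlow_eq s q : Tlow c Gam G Z s q k = Aq q s - Aq s q - Bq s q.
Proof.
rewrite /Tlow /torsionC !gBl !Hm.
rewrite (N2 _ _ (Z10 s) (Zb01 k)) (N2 _ _ (Z10 q) (Zb01 k)).
rewrite !gr01 ?Z10 //.
by rewrite /Aq /Bq opprK [X in X - _]addrC.
Qed.

Lemma Tlowbar_eq r p : Tlowbar c Gam G Z r p j = Abq p r - Abq r p - Bbq r p.
Proof.
rewrite /Tlowbar /torsionC !gBl !Hm.
rewrite (N1 _ _ (Z10 j) (Zb01 r)) (N1 _ _ (Z10 j) (Zb01 p)).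
rewrite !gr10.
  by rewrite /Abq /Bbq opprK [X in X - _]addrC.
all: exact: Zb01.
Qed.

Lemma Omega_eq r :
  OmegaC c Gam G Z r r j k = \sum_(t < n) (- (Abq r t * Aq r t) + Gq r t).
Proof.
rewrite /OmegaC /curvC !gBl.
have -> : g (nab (mu (Z r) (Zb r)) (Z j)) (Zb k) = 0.
  rewrite -(p_split (mu (Z r) (Zb r))) nabDl gDl.
  rewrite Hm (N2 _ _ (p10_is10 _) (Zb01 k)) cen10_l P010 g0r oppr0 add0r.
  by rewrite (N1 _ _ (Z10 j) (p01_is01 _)) cen01_l P100 g0l.
rewrite subr0 big_split /=; congr (_ + _).
- rewrite Hm (N1 _ _ (Z10 j) (Zb01 r)) (N2 _ _ (Z10 r) (Zb01 k)) g_P10_P01.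
  rewrite -sumrN; apply eq_bigr => t _.
  by rewrite /Abq /Aq Hgsym.
- apply/eqP; rewrite eqr_oppLR; apply/eqP.
  rewrite (N1 _ _ (nab10 _ _ (Z10 j)) (Zb01 r)) gl10; last exact: Zb01.
  rewrite -(p10_10 _ (nab10 (Z r) _ (Z10 j))) E10 mu_sumr g_suml -sumrN.
  apply eq_bigr => t _.
  rewrite muZr gZl Hm (N2 _ _ (Z10 r) (Zb01 t)) gr01 ?Z10 //.
  by rewrite /Gq mulNr.
Qed.

Lemma alg (A Ab B Bb Gm : 'I_n -> 'I_n -> C) :
  S2 (fun r p => A p r * Ab r p) = 0 -> S2 (fun r p => A p r * Bb r p) = 0 ->
  S2 (fun r p => A r p * Ab p r) = 0 -> S2 (fun r p => A r p * Bb r p) = 0 ->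
  S2 (fun r p => B r p * Ab p r) = 0 -> S2 (fun r p => B r p * Ab r p) = 0 ->
  S2 (fun r t => - (Ab r t * A r t) + Gm r t)
    + 2^-1 * S2 (fun r p => (A p r - A r p - B r p) * (Ab p r - Ab r p - Bb r p))
  = S2 (fun r s => Gm r s + 2^-1 * (Bb r s * B r s)).
Proof.
move=> W1 W2 W3 W4 W5 W6.
have E : forall r p, (A p r - A r p - B r p) * (Ab p r - Ab r p - Bb r p) =
   A p r * Ab p r + Ab r p * A r p + Bb r p * B r p
   - A p r * Ab r p - A p r * Bb r p - A r p * Ab p r
   + A r p * Bb r p - B r p * Ab p r + B r p * Ab r p.
  by move=> r p; ring.
rewrite (S2_ext _ _ E) !S2D !S2N W1 W2 W3 W4 W5 W6.
rewrite [S2 (fun r p => A p r * Ab p r)]S2_swap.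
rewrite (S2_ext (fun r p => A r p * Ab r p) (fun r p => Ab r p * A r p)); last by move=> r p; rewrite mulrC.
rewrite !oppr0 !addr0 S2Z.
move: (S2 _) (S2 _) (S2 _) => X Y W.
by field.
Qed.


Lemma vanish01 (L : V -> C) X :
  (forall a u v, L (a *: u + v) = a * L u + L v) -> L (P01 X) = 0 ->
  \sum_(i < n) g (Z i) X * L (Zb i) = 0.
Proof.
move=> HL H0; rewrite -[RHS]H0 -(sum_L01 _ HL); apply eq_bigr => i _.
by rewrite Hgsym.
Qed.
Lemma vanish10 (L : V -> C) X :
  (forall a u v, L (a *: u + v) = a * L u + L v) -> L (P10 X) = 0 ->
  \sum_(i < n) L (Z i) * g (Zb i) X = 0.
Proof.
move=> HL H0; rewrite -[RHS]H0 -(sum_L10 _ HL); apply eq_bigr => i _.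
by rewrite Hgsym mulrC.
Qed.

Lemma S_eq : S_chern c Gam G Z j k = S2 (fun r t => - (Abq r t * Aq r t) + Gq r t).
Proof.
rewrite /S_chern ginv1; apply eq_bigr => r _.
by rewrite (sum_delta (fun s => OmegaC c Gam G Z s r j k)) Omega_eq.
Qed.

Definition TT r p := (Aq p r - Aq r p - Bq r p) * (Abq p r - Abq r p - Bbq r p).

Lemma Q_eq : Q2 c Gam G Z j k = S2 TT.
Proof.
rewrite /Q2 ginv1.
transitivity (\sum_(p < n) \sum_(r < n) Tlow c Gam G Z r p k * Tlowbar c Gam G Z r p j).
  apply eq_bigr => p _.
  rewrite (eq_bigr (fun q => 1%:M p q * \sum_(r < n) Tlow c Gam G Z r q k * Tlowbar c Gam G Z r p j)).
    by rewrite (sum_delta (fun q => \sum_(r < n) Tlow c Gam G Z r q k * Tlowbar c Gam G Z r p j)).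
  move=> q _; rewrite mulr_sumr; apply eq_bigr => r _.
  rewrite (eq_bigr (fun s => 1%:M r s * (1%:M p q * Tlow c Gam G Z s q k * Tlowbar c Gam G Z r p j))).
    by rewrite (sum_delta (fun s => 1%:M p q * Tlow c Gam G Z s q k * Tlowbar c Gam G Z r p j)) mulrA.
  by move=> s _; rewrite -!mulrA mulrCA.
rewrite /S2 exchange_big /=; apply eq_bigr => p _; apply eq_bigr => r _.
by rewrite Tlow_eq Tlowbar_eq.
Qed.

Lemma W3 : S2 (fun r p => Aq r p * Abq p r) = 0.
Proof.
rewrite /S2 big1 // => r _.
apply: (vanish01 (fun v => g (Zb r) (mu v (Z j))) (mu (Z r) (Zb k))).
  by move=> a u v /=; rewrite muDl muZl gDr gZr.
by rewrite /= cen01_l g0r.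
Qed.
Lemma W1 : S2 (fun r p => Aq p r * Abq r p) = 0.
Proof. by rewrite S2_swap W3. Qed.
Lemma W2 : S2 (fun r p => Aq p r * Bbq r p) = 0.
Proof.
rewrite S2_swap /S2 big1 // => r _.
apply: (vanish01 (fun v => g (mu v (Zb r)) (Z j)) (mu (Z r) (Zb k))).
  by move=> a u v /=; rewrite muDl muZl gDl gZl.
by rewrite /= cen01_l g0l.
Qed.
Lemma W4 : S2 (fun r p => Aq r p * Bbq r p) = 0.
Proof.
rewrite /S2 big1 // => r _.
apply: (vanish01 (fun v => g (mu (Zb r) v) (Z j)) (mu (Z r) (Zb k))).
  by move=> a u v /=; rewrite muDr muZr gDl gZl.
by rewrite /= cen01_r g0l.
Qed.
Lemma W5 : S2 (fun r p => Bq r p * Abq p r) = 0.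
Proof.
rewrite S2_swap /S2 big1 // => r _.
apply: (vanish10 (fun v => g (mu v (Z r)) (Zb k)) (mu (Zb r) (Z j))).
  by move=> a u v /=; rewrite muDl muZl gDl gZl.
by rewrite /= cen10_l g0l.
Qed.
Lemma W6 : S2 (fun r p => Bq r p * Abq r p) = 0.
Proof.
rewrite /S2 big1 // => r _.
apply: (vanish10 (fun v => g (mu (Z r) v) (Zb k)) (mu (Zb r) (Z j))).
  by move=> a u v /=; rewrite muDr muZr gDl gZl.
by rewrite /= cen10_r g0l.
Qed.

Lemma main_eq :
  Theta c Gam G Z j k =
      \sum_(r < n) \sum_(s < n)
         (g (P01 (mu (Z s) (Zb r))) (Z j) * g (P10 (mu (Zb s) (Z r))) (Zb k)
        + 2^-1 * (g (mu (Zb s) (Zb r)) (Z j) * g (mu (Z s) (Z r)) (Zb k))).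
Proof.
transitivity (S2 (fun r s => Gq r s + 2^-1 * (Bbq r s * Bq r s))); last first.
  rewrite S2_swap; apply: S2_ext => r s.
  rewrite gl01; last exact: Z10.
  rewrite gl10; last exact: Zb01.
  by rewrite /Gq /Bbq /Bq [g (mu (Z s) (Zb r)) (Z j)]Hgsym.
rewrite /Theta S_eq Q_eq /TT.
apply: alg.
- exact: W1.
- exact: W2.
- exact: W3.
- exact: W4.
- exact: W5.
- exact: W6.
Qed.
End JK.

End Main.

Section Ext.
Variables (R : rcfType) (d : nat).
Local Notation V := 'rV[R[i]]_d.
Local Notation C := R[i].

Lemma ext2_v (F : V -> V -> V) :
  (forall a x x' y, F (a *: x + x') y = a *: F x y + F x' y) ->
  (forall a x y y', F x (a *: y + y') = a *: F x y + F x y') ->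
  (forall i j, F (delta_mx 0 i) (delta_mx 0 j) = 0) -> forall x y, F x y = 0.
Proof.
move=> L1 L2 B x y.
apply: (@lin_ext_v _ _ (fun x => F x y)); first by move=> a u v; exact: L1.
move=> i; apply: (@lin_ext_v _ _ (fun y => F (delta_mx 0 i) y)); last exact: B.
by move=> a u v; exact: L2.
Qed.

Lemma ext3_v (F : V -> V -> V -> V) :
  (forall a x x' y z, F (a *: x + x') y z = a *: F x y z + F x' y z) ->
  (forall a x y y' z, F x (a *: y + y') z = a *: F x y z + F x y' z) ->
  (forall a x y z z', F x y (a *: z + z') = a *: F x y z + F x y z') ->
  (forall i j l, F (delta_mx 0 i) (delta_mx 0 j) (delta_mx 0 l) = 0) ->
  forall x y z, F x y z = 0.
Proof.
move=> L1 L2 L3 B x y z.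
apply: (@lin_ext_v _ _ (fun x => F x y z)); first by move=> a u v; exact: L1.
move=> i; apply: (@lin_ext_v _ _ (fun y => F (delta_mx 0 i) y z)).
  by move=> a u v; exact: L2.
move=> j; apply: (@lin_ext_v _ _ (fun z => F (delta_mx 0 i) (delta_mx 0 j) z)); last exact: B.
by move=> a u v; exact: L3.
Qed.

Lemma ext2_s (F : V -> V -> C) :
  (forall a x x' y, F (a *: x + x') y = a * F x y + F x' y) ->
  (forall a x y y', F x (a *: y + y') = a * F x y + F x y') ->
  (forall i j, F (delta_mx 0 i) (delta_mx 0 j) = 0) -> forall x y, F x y = 0.
Proof.
move=> L1 L2 B x y.
apply: (@lin_ext_s _ _ (fun x => F x y)); first by move=> a u v; exact: L1.
move=> i; apply: (@lin_ext_s _ _ (fun y => F (delta_mx 0 i) y)); last exact: B.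
by move=> a u v; exact: L2.
Qed.

Lemma ext3_s (F : V -> V -> V -> C) :
  (forall a x x' y z, F (a *: x + x') y z = a * F x y z + F x' y z) ->
  (forall a x y y' z, F x (a *: y + y') z = a * F x y z + F x y' z) ->
  (forall a x y z z', F x y (a *: z + z') = a * F x y z + F x y z') ->
  (forall i j l, F (delta_mx 0 i) (delta_mx 0 j) (delta_mx 0 l) = 0) ->
  forall x y z, F x y z = 0.
Proof.
move=> L1 L2 L3 B x y z.
apply: (@lin_ext_s _ _ (fun x => F x y z)); first by move=> a u v; exact: L1.
move=> i; apply: (@lin_ext_s _ _ (fun y => F (delta_mx 0 i) y z)).
  by move=> a u v; exact: L2.
move=> j; apply: (@lin_ext_s _ _ (fun z => F (delta_mx 0 i) (delta_mx 0 j) z)); last exact: B.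
by move=> a u v; exact: L3.
Qed.

Lemma combD_v a (P Q S T : V) : (a *: P + Q) + (a *: S + T) = a *: (P + S) + (Q + T).
Proof. by rewrite scalerDr addrACA. Qed.
Lemma combB_v a (P Q S T : V) : (a *: P + Q) - (a *: S + T) = a *: (P - S) + (Q - T).
Proof. by rewrite scalerBr opprD addrACA. Qed.
Lemma combD_s a (P Q S T : C) : (a * P + Q) + (a * S + T) = a * (P + S) + (Q + T).
Proof. by rewrite mulrDr addrACA. Qed.
Lemma combB_s a (P Q S T : C) : (a * P + Q) - (a * S + T) = a * (P - S) + (Q - T).
Proof. by rewrite mulrBr opprD addrACA. Qed.

Lemma cplx_mxD (x y : 'rV[R]_d) : cplx_mx (x + y) = cplx_mx x + cplx_mx y.
Proof. by apply/rowP => k; rewrite /cplx_mx !mxE /cplx rmorphD. Qed.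
Lemma cplx_mxB (x y : 'rV[R]_d) : cplx_mx (x - y) = cplx_mx x - cplx_mx y.
Proof. by apply/rowP => k; rewrite /cplx_mx !mxE /cplx rmorphB. Qed.
End Ext.

Theorem proposition2p1 (R : rcfType) (n : nat)
    (c : 'I_n.*2 -> 'I_n.*2 -> 'rV[R]_n.*2) (J G : 'M[R]_n.*2)
    (Gam : 'I_n.*2 -> 'I_n.*2 -> 'rV[R]_n.*2)
    (Z : 'I_n -> 'rV[R[i]]_n.*2) :
  is_lie_bracket c -> two_step_nilpotent c ->
  is_complex_structure c J -> is_hermitian_metric J G ->
  (forall x y, in_center c (actJ J (bil c x y))) ->
  is_chern_connection c Gam J G ->
  is_10_frame J Z -> is_unitary_frame G Z ->
  forall j k : 'I_n,
    Theta c Gam G Z j k =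
      \sum_(r < n) \sum_(s < n)
         (gC G (p01 J (muC c (Z s) (conjv (Z r)))) (Z j)
          * gC G (p10 J (muC c (conjv (Z s)) (Z r))) (conjv (Z k))
        + 2^-1 * (gC G (muC c (conjv (Z s)) (conjv (Z r))) (Z j)
                  * gC G (muC c (Z s) (Z r)) (conjv (Z k)))).
Proof.
move=> [Hanti_r _] [Hnil_r _] [HJ2_r _] [HGsym [_ HGJ]] Hcen [Hmet_r [HnabJ_r Htor]]
  Hframe Hunit j k.
apply: main_eq => //.
-
  move=> x y; apply/eqP; rewrite -addr_eq0; apply/eqP; move: x y.
  apply: (@ext2_v _ _ (fun x y => muC c x y + muC c y x)).
  + by move=> a x x' y; rewrite /muC bilDl bilZl bilDr bilZr combD_v.
  + by move=> a x y y'; rewrite /muC bilDl bilZl bilDr bilZr combD_v.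
  + move=> i0 j0; rewrite /muC -!cplx_delta -!cplx_mx_bil -cplx_mxD.
    by rewrite Hanti_r addNr cplx_mx0.
-
  apply: (@ext3_v _ _ (fun x y z => muC c (muC c x y) z)).
  + by move=> a x x' y z; rewrite /muC !(bilDl, bilZl).
  + by move=> a x y y' z; rewrite /muC bilDr bilZr !(bilDl, bilZl).
  + by move=> a x y z z'; rewrite /muC !(bilDr, bilZr).
  + move=> i0 j0 l0; rewrite /muC -!cplx_delta -!cplx_mx_bil.
    by rewrite Hnil_r cplx_mx0.
-
  apply: (@ext3_v _ _ (fun x y z => muC c (JC J (muC c x y)) z)).
  + by move=> a x x' y z; rewrite /muC /JC bilDl bilZl actJD actJZ bilDl bilZl.
  + by move=> a x y y' z; rewrite /muC /JC bilDr bilZr actJD actJZ bilDl bilZl.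
  + by move=> a x y z z'; rewrite /muC !(bilDr, bilZr).
  + move=> i0 j0 l0; rewrite /muC /JC -!cplx_delta -!cplx_mx_bil -cplx_mx_actJ -cplx_mx_bil.
    by rewrite Hcen cplx_mx0.
-
  move=> x; rewrite /JC /actJ -mulmxA -cplx_mx_mul HJ2_r cplx_mx_opp cplx_mx1.
  by rewrite mulmxN mulmx1.
-
  by move=> x y; apply: form_sym; rewrite -cplx_mx_tr HGsym.
-
  move=> x y; apply/eqP; rewrite -subr_eq0; apply/eqP; move: x y.
  apply: (@ext2_s _ _ (fun x y => gC G (JC J x) (JC J y) - gC G x y)).
  + by move=> a x x' y; rewrite /gC /JC actJD actJZ !(formDl, formZl) combB_s.
  + by move=> a x y y'; rewrite /gC /JC actJD actJZ !(formDr, formZr) combB_s.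
  + move=> i0 j0; rewrite /gC /JC -!cplx_delta -!cplx_mx_actJ -!cplx_form.
    by rewrite HGJ subrr.
-
  apply: (@ext3_s _ _ (fun x y w => gC G (nablaC Gam x y) w + gC G y (nablaC Gam x w))).
  + by move=> a x x' y z; rewrite /gC /nablaC !bilDl !bilZl !(formDl, formZl, formDr, formZr) combD_s.
  + by move=> a x y y' z; rewrite /gC /nablaC bilDr bilZr !(formDl, formZl, formDr, formZr) combD_s.
  + by move=> a x y z z'; rewrite /gC /nablaC bilDr bilZr !(formDl, formZl, formDr, formZr) combD_s.
  + move=> i0 j0 l0; rewrite /gC /nablaC -!cplx_delta -!cplx_mx_bil -!cplx_form.
    by rewrite /cplx -rmorphD Hmet_r.
-
  move=> x y; apply/eqP; rewrite -subr_eq0; apply/eqP; move: x y.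
  apply: (@ext2_v _ _ (fun x y => nablaC Gam x (JC J y) - JC J (nablaC Gam x y))).
  + by move=> a x x' y; rewrite /nablaC /JC !(bilDl, bilZl) actJD actJZ combB_v.
  + by move=> a x y y'; rewrite /nablaC /JC actJD actJZ !(bilDr, bilZr) actJD actJZ combB_v.
  + move=> i0 j0; rewrite /nablaC /JC -!cplx_delta -!cplx_mx_actJ -!cplx_mx_bil -cplx_mx_actJ.
    by rewrite HnabJ_r subrr.
Qed.
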